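(* Let $\Omega\subset\mathbb{R}^2$ be a domain and $u\in C^{2}(\Omega)$. Let $S(u)=\{(x,y)\in\Omega:u_x-y=0,\ u_y+x=0\}$, on $\Omega\setminus S(u)$ let $D=\sqrt{(u_x-y)^2+(u_y+x)^2}$, $N(u)=(u_x-y,u_y+x)/D$, $N^\perp(u)=(u_y+x,-(u_x-y))/D$, and $H=\operatorname{div}N(u)$. Let $p_0\in S(u)$ be an isolated point of $S(u)$ and suppose $|H(p)|=o(1/r(p))$ as $p\to p_0$, where $r(p)=|p-p_0|$. Consider the $C^1$ vector field $N^\perp D=(u_y+x,\,-u_x+y)$ on $\Omega$ as a map $\Omega\to\mathbb{R}^2$. Then the differential $d(N^\perp D)_{p_0}$ is the identity linear transformation, the index of $N^\perp D$ at its isolated zero $p_0$ is $+1$, and $u_{xx}=u_{xy}=u_{yy}=0$ at $p_0$. *)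

(* Defs.v *)
From Stdlib Require Import Reals Lra.
From Coquelicot Require Import Coquelicot.
Open Scope R_scope.

Definition pt := (R * R)%type.

Definition dist2 (p q : pt) : R :=
  sqrt ((fst p - fst q)^2 + (snd p - snd q)^2).

Definition norm2 (v : pt) : R := sqrt ((fst v)^2 + (snd v)^2).

Definition open2 (O : pt -> Prop) : Prop :=
  forall p, O p -> exists e, 0 < e /\ forall q, dist2 q p < e -> O q.

Definition connected2 (O : pt -> Prop) : Prop :=
  forall U V : pt -> Prop, open2 U -> open2 V ->
    (forall p, O p -> U p \/ V p) ->
    (forall p, O p -> U p -> V p -> False) ->
    (exists p, O p /\ U p) -> (exists p, O p /\ V p) -> False.

Definition domain2 (O : pt -> Prop) : Prop :=
  (exists p, O p) /\ open2 O /\ connected2 O.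

Definition cont2_at (f : pt -> R) (p : pt) : Prop :=
  forall e, 0 < e -> exists d, 0 < d /\
    forall q, dist2 q p < d -> Rabs (f q - f p) < e.

Definition dx (f : pt -> R) : pt -> R := fun p => Derive (fun t => f (t, snd p)) (fst p).
Definition dy (f : pt -> R) : pt -> R := fun p => Derive (fun t => f (fst p, t)) (snd p).
Definition ex_dx (f : pt -> R) (p : pt) : Prop := ex_derive (fun t => f (t, snd p)) (fst p).
Definition ex_dy (f : pt -> R) (p : pt) : Prop := ex_derive (fun t => f (fst p, t)) (snd p).

Definition C2_on (O : pt -> Prop) (u : pt -> R) : Prop :=
  forall p, O p ->
    ex_dx u p /\ ex_dy u p /\
    ex_dx (dx u) p /\ ex_dy (dx u) p /\ ex_dx (dy u) p /\ ex_dy (dy u) p /\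
    cont2_at u p /\ cont2_at (dx u) p /\ cont2_at (dy u) p /\
    cont2_at (dx (dx u)) p /\ cont2_at (dy (dx u)) p /\
    cont2_at (dx (dy u)) p /\ cont2_at (dy (dy u)) p.

Definition sing (O : pt -> Prop) (u : pt -> R) (p : pt) : Prop :=
  O p /\ dx u p - snd p = 0 /\ dy u p + fst p = 0.

Definition Dlen (u : pt -> R) (p : pt) : R :=
  sqrt ((dx u p - snd p)^2 + (dy u p + fst p)^2).

Definition N1 (u : pt -> R) (p : pt) : R := (dx u p - snd p) / Dlen u p.
Definition N2 (u : pt -> R) (p : pt) : R := (dy u p + fst p) / Dlen u p.

(* H = div N(u) (meaningful on Omega \ S(u)) *)
Definition Hcurv (u : pt -> R) (p : pt) : R := dx (N1 u) p + dy (N2 u) p.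

Definition NperpD (u : pt -> R) (p : pt) : pt :=
  (dy u p + fst p, - dx u p + snd p).

Definition isolated_sing (O : pt -> Prop) (u : pt -> R) (p0 : pt) : Prop :=
  sing O u p0 /\ exists d, 0 < d /\
    forall p, O p -> 0 < dist2 p p0 < d -> ~ sing O u p.

Definition differential_is_id (V : pt -> pt) (p0 : pt) : Prop :=
  forall e, 0 < e -> exists d, 0 < d /\
    forall p, dist2 p p0 < d ->
      norm2 (fst (V p) - fst (V p0) - (fst p - fst p0),
             snd (V p) - snd (V p0) - (snd p - snd p0)) <= e * dist2 p p0.

Definition index_at (V : pt -> pt) (p0 : pt) (k : Z) : Prop :=
  V p0 = (0, 0) /\
  exists eps, 0 < eps /\
    (forall p, 0 < dist2 p p0 < eps -> V p <> (0, 0)) /\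
    forall r, 0 < r < eps ->
      exists theta : R -> R,
        (forall t, continuity_pt theta t) /\
        (forall t, 0 <= t <= 2 * PI ->
           let q := V (fst p0 + r * cos t, snd p0 + r * sin t) in
           fst q = norm2 q * cos (theta t) /\ snd q = norm2 q * sin (theta t)) /\
        theta (2 * PI) - theta 0 = 2 * PI * IZR k.

(* Main.v *)
Require Import Defs.
From Stdlib Require Import Reals Lra Psatz.
From Coquelicot Require Import Coquelicot.
Open Scope R_scope.

Lemma sqrt_sum_le a b : sqrt (a^2 + b^2) <= Rabs a + Rabs b.
Proof.
  rewrite <- (sqrt_pow2 (Rabs a + Rabs b)) by (generalize (Rabs_pos a) (Rabs_pos b); lra).
  apply sqrt_le_1_alt.
  rewrite <- (pow2_abs a), <- (pow2_abs b).
  generalize (Rabs_pos a) (Rabs_pos b); nra.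
Qed.

Lemma sqrt_ge_abs a b : Rabs a <= sqrt (a^2 + b^2).
Proof.
  rewrite <- (sqrt_pow2 (Rabs a)) by apply Rabs_pos.
  apply sqrt_le_1_alt. rewrite pow2_abs. nra.
Qed.

Lemma dist2_x p q : Rabs (fst p - fst q) <= dist2 p q.
Proof. unfold dist2. apply sqrt_ge_abs. Qed.

Lemma dist2_y p q : Rabs (snd p - snd q) <= dist2 p q.
Proof. unfold dist2. rewrite Rplus_comm. apply sqrt_ge_abs. Qed.

Lemma dist2_le p q : dist2 p q <= Rabs (fst p - fst q) + Rabs (snd p - snd q).
Proof. apply sqrt_sum_le. Qed.

Lemma dist2_ge0 p q : 0 <= dist2 p q.
Proof. apply sqrt_pos. Qed.

Lemma dist2_refl p : dist2 p p = 0.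
Proof. unfold dist2. replace ((fst p - fst p)^2 + (snd p - snd p)^2) with 0 by ring. apply sqrt_0. Qed.

Lemma dist2_circle x0 y0 r t : 0 <= r ->
  dist2 (x0 + r * cos t, y0 + r * sin t) (x0, y0) = r.
Proof.
  intros Hr. unfold dist2; simpl.
  replace ((x0 + r * cos t - x0) * ((x0 + r * cos t - x0) * 1) +
           (y0 + r * sin t - y0) * ((y0 + r * sin t - y0) * 1)) with (r^2 * ((sin t)² + (cos t)²))
    by (unfold Rsqr; ring).
  rewrite sin2_cos2, Rmult_1_r. apply sqrt_pow2; auto.
Qed.

Lemma cont_eps (f : R -> R) t : continuity_pt f t <->
  forall e, 0 < e -> exists d, 0 < d /\ forall s, Rabs (s - t) < d -> Rabs (f s - f t) < e.
Proof.
  unfold continuity_pt, continue_in, limit1_in, limit_in; simpl; unfold R_dist, D_x, no_cond.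
  split; intros H e He; destruct (H e He) as [d [Hd H']]; exists d; split; auto.
  - intros s Hs. destruct (Req_dec s t) as [->|Hne].
    + unfold Rminus; rewrite Rplus_opp_r, Rabs_R0; auto.
    + apply H'. split; auto.
  - intros s [_ Hs]. apply H'; auto.
Qed.

Lemma cont2_comp (f : pt -> R) (g1 g2 : R -> R) t :
  continuity_pt g1 t -> continuity_pt g2 t -> cont2_at f (g1 t, g2 t) ->
  continuity_pt (fun s => f (g1 s, g2 s)) t.
Proof.
  intros H1 H2 Hf. apply (proj2 (cont_eps _ _)). intros e He.
  destruct (Hf e He) as [d [Hd Hd']].
  pose proof (proj1 (cont_eps _ _) H1) as H1c. pose proof (proj1 (cont_eps _ _) H2) as H2c.
  destruct (H1c (d/2) ltac:(lra)) as [d1 [Hd1 H1']].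
  destruct (H2c (d/2) ltac:(lra)) as [d2 [Hd2 H2']].
  exists (Rmin d1 d2). split. apply Rmin_pos; auto.
  intros s Hs. apply Hd'.
  eapply Rle_lt_trans. apply dist2_le. simpl.
  assert (Rabs (s - t) < d1) by (eapply Rlt_le_trans; [exact Hs| apply Rmin_l]).
  assert (Rabs (s - t) < d2) by (eapply Rlt_le_trans; [exact Hs| apply Rmin_r]).
  specialize (H1' s H). specialize (H2' s H0). lra.
Qed.

Lemma cont2_plus_const f c p : cont2_at f p -> cont2_at (fun q => f q + c) p.
Proof.
  intros H e He. destruct (H e He) as [d [Hd H']]. exists d; split; auto.
  intros q Hq. replace (f q + c - (f p + c)) with (f q - f p) by ring. auto.
Qed.


Lemma dist2_monox c x y x0 y0 : Rabs (c - x0) <= Rabs (x - x0) ->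
  dist2 (c, y) (x0, y0) <= dist2 (x, y) (x0, y0).
Proof.
  intros H. unfold dist2; cbn [fst snd]. apply sqrt_le_1_alt.
  rewrite <- (pow2_abs (c - x0)), <- (pow2_abs (x - x0)) in *.
  generalize (Rabs_pos (c - x0)); intros; simpl in *; nra.
Qed.

Lemma dist2_monoy c y x0 y0 : Rabs (c - y0) <= Rabs (y - y0) ->
  dist2 (x0, c) (x0, y0) <= dist2 (x0, y) (x0, y0).
Proof.
  intros H. unfold dist2; cbn [fst snd]. apply sqrt_le_1_alt.
  generalize (Rabs_pos (c - y0)); intros.
  assert (Rabs (c - y0) ^ 2 <= Rabs (y - y0) ^2) by nra.
  rewrite !pow2_abs in H1. simpl in *; nra.
Qed.

Lemma frechet (f fx fy : pt -> R) p0 rho : 0 < rho ->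
  (forall p, dist2 p p0 < rho ->
     is_derive (fun t => f (t, snd p)) (fst p) (fx p) /\
     is_derive (fun t => f (fst p, t)) (snd p) (fy p)) ->
  cont2_at fx p0 -> cont2_at fy p0 ->
  forall e, 0 < e -> exists d, 0 < d /\ forall p, dist2 p p0 < d ->
    Rabs (f p - f p0 - fx p0 * (fst p - fst p0) - fy p0 * (snd p - snd p0)) <= e * dist2 p p0.
Proof.
  intros Hrho Hder Hcx Hcy e He.
  destruct (Hcx (e/2) ltac:(lra)) as [d1 [Hd1 H1]].
  destruct (Hcy (e/2) ltac:(lra)) as [d2 [Hd2 H2]].
  exists (Rmin rho (Rmin d1 d2)). split.
  { apply Rmin_pos; auto. apply Rmin_pos; auto. }
  intros [x y] Hp. destruct p0 as [x0 y0]. simpl in *.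
  set (r := dist2 (x, y) (x0, y0)) in *.
  assert (Hr1 : r < rho) by (eapply Rlt_le_trans; [exact Hp|apply Rmin_l]).
  assert (Hr2 : r < d1) by (eapply Rlt_le_trans; [exact Hp|eapply Rle_trans; [apply Rmin_r|apply Rmin_l]]).
  assert (Hr3 : r < d2) by (eapply Rlt_le_trans; [exact Hp|eapply Rle_trans; [apply Rmin_r|apply Rmin_r]]).
  assert (Hx : Rabs (x - x0) <= r) by (apply (dist2_x (x,y) (x0,y0))).
  assert (Hy : Rabs (y - y0) <= r) by (apply (dist2_y (x,y) (x0,y0))).
  assert (Hr0 : dist2 (x0, y) (x0, y0) <= r).
  { apply dist2_monox. unfold Rminus; rewrite Rplus_opp_r, Rabs_R0; apply Rabs_pos. }
  destruct (MVT_cor4 (fun t => f (t, y)) (fun t => fx (t, y)) x0 (Rabs (x - x0))) with (b := x)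
    as [c1 [Hc1 Hc1']].
  { intros c Hc. assert (Hd : dist2 (c, y) (x0, y0) <= r) by (apply dist2_monox; auto).
    apply (Hder (c, y)). lra. }
  { lra. }
  destruct (MVT_cor4 (fun t => f (x0, t)) (fun t => fy (x0, t)) y0 (Rabs (y - y0))) with (b := y)
    as [c2 [Hc2 Hc2']].
  { intros c Hc. assert (Hd : dist2 (x0, c) (x0, y0) <= dist2 (x0, y) (x0, y0)) by (apply dist2_monoy; auto).
    apply (Hder (x0, c)). lra. }
  { lra. }
  assert (E1 : Rabs (fx (c1, y) - fx (x0, y0)) < e/2).
  { apply H1. assert (dist2 (c1, y) (x0, y0) <= r) by (apply dist2_monox; auto). lra. }
  assert (E2 : Rabs (fy (x0, c2) - fy (x0, y0)) < e/2).
  { apply H2. assert (dist2 (x0, c2) (x0, y0) <= dist2 (x0, y) (x0, y0)) by (apply dist2_monoy; auto). lra. }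
  replace (f (x, y) - f (x0, y0) - fx (x0, y0) * (x - x0) - fy (x0, y0) * (y - y0))
    with ((fx (c1, y) - fx (x0, y0)) * (x - x0) + (fy (x0, c2) - fy (x0, y0)) * (y - y0)) by lra.
  eapply Rle_trans. apply Rabs_triang. rewrite !Rabs_mult.
  assert (Rabs (fx (c1, y) - fx (x0, y0)) * Rabs (x - x0) <= e/2 * r).
  { apply Rmult_le_compat; auto using Rabs_pos; lra. }
  assert (Rabs (fy (x0, c2) - fy (x0, y0)) * Rabs (y - y0) <= e/2 * r).
  { apply Rmult_le_compat; auto using Rabs_pos; lra. }
  lra.
Qed.


Definition aa u p := dx u p - snd p.
Definition bb u p := dy u p + fst p.

Lemma aa_derx u p : ex_dx (dx u) p -> is_derive (fun t => aa u (t, snd p)) (fst p) (dx (dx u) p).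
Proof.
  intros H. unfold aa. cbn [fst snd].
  replace (dx (dx u) p) with (dx (dx u) p - 0) by ring.
  apply (is_derive_minus (fun t => dx u (t, snd p)) (fun _ => snd p)).
  apply Derive_correct; exact H. exact (is_derive_const (K:=R_AbsRing) _ _).
Qed.

Lemma aa_dery u p : ex_dy (dx u) p -> is_derive (fun t => aa u (fst p, t)) (snd p) (dy (dx u) p - 1).
Proof.
  intros H. unfold aa. cbn [fst snd].
  apply (is_derive_minus (fun t => dx u (fst p, t)) (fun t => t)).
  apply Derive_correct; exact H. exact (is_derive_id (K:=R_AbsRing) _).
Qed.

Lemma bb_derx u p : ex_dx (dy u) p -> is_derive (fun t => bb u (t, snd p)) (fst p) (dx (dy u) p + 1).
Proof.
  intros H. unfold bb. cbn [fst snd].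
  apply (is_derive_plus (fun t => dy u (t, snd p)) (fun t => t)).
  apply Derive_correct; exact H. exact (is_derive_id (K:=R_AbsRing) _).
Qed.

Lemma bb_dery u p : ex_dy (dy u) p -> is_derive (fun t => bb u (fst p, t)) (snd p) (dy (dy u) p).
Proof.
  intros H. unfold bb. cbn [fst snd].
  replace (dy (dy u) p) with (dy (dy u) p + 0) by ring.
  apply (is_derive_plus (fun t => dy u (fst p, t)) (fun _ => fst p)).
  apply Derive_correct; exact H. exact (is_derive_const (K:=R_AbsRing) _ _).
Qed.

Lemma derN_alg (G H g' h' D : R) : 0 < D -> D * D = G ^ 2 + H ^ 2 ->
  g' / D - G * (G * g' + H * h') / D ^ 3 =
  (g' * D - G * (((1 + 1) * g' * G ^ 1 + (1 + 1) * h' * H ^ 1) / (2 * D))) / D ^ 2.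
Proof.
  intros HD HD2. field. lra.
Qed.

Lemma derN (g h : R -> R) x g' h' : is_derive g x g' -> is_derive h x h' ->
  0 < g x ^ 2 + h x ^ 2 ->
  is_derive (fun t => g t / sqrt (g t ^ 2 + h t ^ 2)) x
    (g' / sqrt (g x ^ 2 + h x ^ 2) - g x * (g x * g' + h x * h') / sqrt (g x ^ 2 + h x ^ 2) ^ 3).
Proof.
  intros Hg Hh Hpos.
  assert (Hk : is_derive (fun t => g t ^ 2 + h t ^ 2) x (INR 2 * g' * g x ^ 1 + INR 2 * h' * h x ^ 1)).
  { apply (is_derive_plus (fun t => g t ^ 2) (fun t => h t ^ 2)); apply is_derive_pow; auto. }
  pose proof (is_derive_sqrt _ _ _ Hk Hpos) as Hs.
  set (D := sqrt (g x ^ 2 + h x ^ 2)) in *.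
  assert (HD : 0 < D) by (apply sqrt_lt_R0; auto).
  assert (HD2 : D * D = g x ^ 2 + h x ^ 2) by (apply sqrt_sqrt; lra).
  pose proof (is_derive_div g (fun t => sqrt (g t ^ 2 + h t ^ 2)) x _ _ Hg Hs ltac:(cbv beta; fold D; apply Rgt_not_eq; lra)) as Hd.
  cbv beta in Hd. fold D in Hd.
  replace (g' / D - g x * (g x * g' + h x * h') / D ^ 3) with
    ((g' * D - g x * ((INR 2 * g' * g x ^ 1 + INR 2 * h' * h x ^ 1) / (2 * D))) / D ^ 2); auto.
  simpl INR. symmetry; apply derN_alg; auto.
Qed.

Lemma Hcurv_formula u p :
  ex_dx (dx u) p -> ex_dy (dx u) p -> ex_dx (dy u) p -> ex_dy (dy u) p ->
  0 < aa u p ^ 2 + bb u p ^ 2 ->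
  Hcurv u p * Dlen u p =
  (dy (dy u) p * aa u p ^ 2 - (dy (dx u) p + dx (dy u) p) * aa u p * bb u p
   + dx (dx u) p * bb u p ^ 2) / (aa u p ^ 2 + bb u p ^ 2).
Proof.
  intros H1 H2 H3 H4 Hpos.
  destruct p as [x y].
  assert (E1 : dx (N1 u) (x, y) =
    dx (dx u) (x,y) / sqrt (aa u (x,y) ^ 2 + bb u (x,y) ^ 2) - aa u (x,y) * (aa u (x,y) * dx (dx u) (x,y) + bb u (x,y) * (dx (dy u) (x,y) + 1)) / sqrt (aa u (x,y) ^ 2 + bb u (x,y) ^ 2) ^ 3).
  { apply is_derive_unique.
    apply (derN (fun t => aa u (t, y)) (fun t => bb u (t, y)) x); auto.
    apply (aa_derx u (x,y)); auto. apply (bb_derx u (x,y)); auto. }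
  assert (E2 : dy (N2 u) (x, y) =
    dy (dy u) (x,y) / sqrt (bb u (x,y) ^ 2 + aa u (x,y) ^ 2) - bb u (x,y) * (bb u (x,y) * dy (dy u) (x,y) + aa u (x,y) * (dy (dx u) (x,y) - 1)) / sqrt (bb u (x,y) ^ 2 + aa u (x,y) ^ 2) ^ 3).
  { apply is_derive_unique.
    eapply is_derive_ext; [|apply (derN (fun t => bb u (x, t)) (fun t => aa u (x, t)) y)].
    - intros t. simpl. unfold N2, Dlen, aa, bb. simpl. f_equal. f_equal. ring.
    - apply (bb_dery u (x,y)); auto.
    - apply (aa_dery u (x,y)); auto.
    - lra. }
  unfold Hcurv. rewrite E1, E2.
  rewrite (Rplus_comm (bb u (x,y) ^ 2)).
  unfold Dlen. fold (aa u (x,y)). fold (bb u (x,y)).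
  set (A := aa u (x,y)) in *. set (B := bb u (x,y)) in *.
  set (D := sqrt (A ^ 2 + B ^ 2)).
  assert (HD : 0 < D) by (apply sqrt_lt_R0; auto).
  assert (HD2 : D * D = A ^ 2 + B ^ 2) by (apply sqrt_sqrt; lra).
  replace (D ^ 3) with (D * (D * D)) by ring. rewrite HD2. field. split; lra.
Qed.


Lemma cpt_plus f g t : continuity_pt f t -> continuity_pt g t -> continuity_pt (fun s => f s + g s) t.
Proof. intros; exact (continuity_pt_plus f g t H H0). Qed.
Lemma cpt_minus f g t : continuity_pt f t -> continuity_pt g t -> continuity_pt (fun s => f s - g s) t.
Proof. intros; exact (continuity_pt_minus f g t H H0). Qed.
Lemma cpt_mult f g t : continuity_pt f t -> continuity_pt g t -> continuity_pt (fun s => f s * g s) t.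
Proof. intros; exact (continuity_pt_mult f g t H H0). Qed.
Lemma cpt_const c t : continuity_pt (fun _ => c) t.
Proof. apply continuity_pt_const. intros a b; reflexivity. Qed.
Lemma cpt_abs f t : continuity_pt f t -> continuity_pt (fun s => Rabs (f s)) t.
Proof. intros; exact (continuity_pt_comp f Rabs t H (Rcontinuity_abs _)). Qed.
Lemma cpt_cos t : continuity_pt cos t.
Proof. apply continuity_cos. Qed.
Lemma cpt_sin t : continuity_pt sin t.
Proof. apply continuity_sin. Qed.
Lemma cpt_id t : continuity_pt (fun s => s) t.
Proof. apply derivable_continuous_pt. apply derivable_pt_id. Qed.

Lemma circ_x_cont x0 r t : continuity_pt (fun s => x0 + r * cos s) t.
Proof. apply cpt_plus. apply cpt_const. apply cpt_mult. apply cpt_const. apply cpt_cos. Qed.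
Lemma circ_y_cont y0 r t : continuity_pt (fun s => y0 + r * sin s) t.
Proof. apply cpt_plus. apply cpt_const. apply cpt_mult. apply cpt_const. apply cpt_sin. Qed.

Definition Qf (QY QS QX z1 z2 : R) := QY * z1 ^ 2 - QS * z1 * z2 + QX * z2 ^ 2.

Lemma abs_lin_bound c1 c2 e1 e2 M : Rabs e1 <= M -> Rabs e2 <= M ->
  Rabs (c1 * e1 + c2 * e2) <= (Rabs c1 + Rabs c2) * M.
Proof.
  intros H1 H2. eapply Rle_trans. apply Rabs_triang. rewrite !Rabs_mult.
  generalize (Rabs_pos c1) (Rabs_pos c2); intros. nra.
Qed.

Lemma key_abstract (A B : pt -> R) (x0 y0 j11 j12 j21 j22 QY QS QX rho t0 : R) :
  0 < rho ->
  (forall p, dist2 p (x0,y0) < rho -> cont2_at A p /\ cont2_at B p) ->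
  (forall e, 0 < e -> exists d, 0 < d /\ forall p, dist2 p (x0,y0) < d ->
     Rabs (A p - (j11 * (fst p - x0) + j12 * (snd p - y0))) <= e * dist2 p (x0,y0) /\
     Rabs (B p - (j21 * (fst p - x0) + j22 * (snd p - y0))) <= e * dist2 p (x0,y0)) ->
  (exists d, 0 < d /\ forall p, 0 < dist2 p (x0,y0) < d -> ~ (A p = 0 /\ B p = 0)) ->
  (forall e, 0 < e -> exists d, 0 < d /\ forall p, 0 < dist2 p (x0,y0) < d -> ~ (A p = 0 /\ B p = 0) ->
     Rabs (Qf QY QS QX (A p) (B p)) <= e * (A p ^ 2 + B p ^ 2)) ->
  forall c1 c2, c1 = j11 * cos t0 + j12 * sin t0 -> c2 = j21 * cos t0 + j22 * sin t0 ->
  (c1 <> 0 \/ c2 <> 0) ->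
  forall k, 0 <= k <= 2 -> forall e, 0 < e -> exists s, (s = 1 \/ s = -1) /\
     Rabs (Qf QY QS QX (k*c1 - s*c2) (k*c2 + s*c1)) <= e.
Proof.
  intros Hrho Hcont Hfr [di [Hdi Hiso]] Hsm c1 c2 Hc1 Hc2 Hc k Hk e He.
  set (N := c1 ^ 2 + c2 ^ 2).
  assert (HN : 0 < N) by (unfold N; destruct Hc as [Hc|Hc]; [generalize (pow2_gt_0 c1 Hc)| generalize (pow2_gt_0 c2 Hc)]; intros; nra).
  set (L := Rabs c1 + Rabs c2).
  assert (HL : 0 < L).
  { unfold L. destruct Hc as [Hc|Hc]; [generalize (Rabs_pos_lt c1 Hc) (Rabs_pos c2)|generalize (Rabs_pos_lt c2 Hc) (Rabs_pos c1)]; intros; lra. }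
  set (ef := N / (4 * L)).
  assert (Hef : 0 < ef) by (unfold ef; apply Rdiv_lt_0_compat; lra).
  assert (HefL : L * ef = N / 4) by (unfold ef; field; lra).
  destruct (Hfr ef Hef) as [df [Hdf Hdf']].
  set (e' := e / ((k^2 + 1) * N)).
  assert (He' : 0 < e') by (unfold e'; apply Rdiv_lt_0_compat; nra).
  destruct (Hsm e' He') as [ds [Hds Hds']].
  set (r := Rmin (Rmin rho df) (Rmin di ds) / 2).
  assert (Hm0 : 0 < Rmin (Rmin rho df) (Rmin di ds)) by (repeat apply Rmin_pos; auto).
  assert (Hr0 : 0 < r) by (unfold r; lra).
  assert (Hr1 : r < rho /\ r < df /\ r < di /\ r < ds).
  { unfold r. generalize (Rmin_l rho df) (Rmin_r rho df) (Rmin_l di ds) (Rmin_r di ds)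
      (Rmin_l (Rmin rho df) (Rmin di ds)) (Rmin_r (Rmin rho df) (Rmin di ds)).
    assert (0 < Rmin (Rmin rho df) (Rmin di ds)) by (repeat apply Rmin_pos; auto). lra. }
  set (gx := fun t => x0 + r * cos t).
  set (gy := fun t => y0 + r * sin t).
  assert (Hdist : forall t, dist2 (gx t, gy t) (x0, y0) = r).
  { intros t. unfold gx, gy. apply dist2_circle. lra. }
  set (al := fun t => c1 * A (gx t, gy t) + c2 * B (gx t, gy t)).
  set (be := fun t => - c2 * A (gx t, gy t) + c1 * B (gx t, gy t)).
  set (g := fun t => al t - k * Rabs (be t)).
  assert (HAc : forall t, continuity_pt (fun s => A (gx s, gy s)) t).
  { intros t. apply cont2_comp. apply circ_x_cont. apply circ_y_cont.
    apply Hcont. rewrite Hdist. lra. }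
  assert (HBc : forall t, continuity_pt (fun s => B (gx s, gy s)) t).
  { intros t. apply cont2_comp. apply circ_x_cont. apply circ_y_cont.
    apply Hcont. rewrite Hdist. lra. }
  assert (Hgc : continuity g).
  { intros t. unfold g, al, be. apply cpt_minus.
    - apply cpt_plus; apply cpt_mult; auto using cpt_const.
    - apply cpt_mult. apply cpt_const. apply cpt_abs.
      apply cpt_plus; apply cpt_mult; auto using cpt_const. }
  assert (Hend : forall sg, (sg = 1 \/ sg = -1) -> forall t, cos t = sg * cos t0 -> sin t = sg * sin t0 ->
     Rabs (al t - sg * r * N) <= r * N / 4 /\ Rabs (be t) <= r * N / 4).
  { intros sg Hsg t Hct Hst.
    destruct (Hdf' (gx t, gy t)) as [E1 E2]. rewrite Hdist; lra.
    rewrite Hdist in E1, E2. unfold gx, gy in E1, E2. cbn [fst snd] in E1, E2.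
    set (a1 := A (gx t, gy t)) in *. set (b1 := B (gx t, gy t)) in *.
    replace (j11 * (x0 + r * cos t - x0) + j12 * (y0 + r * sin t - y0)) with (sg * r * c1) in E1
      by (rewrite Hct, Hst, Hc1; ring).
    replace (j21 * (x0 + r * cos t - x0) + j22 * (y0 + r * sin t - y0)) with (sg * r * c2) in E2
      by (rewrite Hct, Hst, Hc2; ring).
    split.
    - unfold al. fold a1 b1.
      replace (c1 * a1 + c2 * b1 - sg * r * N) with (c1 * (a1 - sg * r * c1) + c2 * (b1 - sg * r * c2))
        by (unfold N; destruct Hsg; subst; ring).
      eapply Rle_trans. apply abs_lin_bound; eauto. fold L. nra.
    - unfold be. fold a1 b1.
      replace (- c2 * a1 + c1 * b1) with ((- c2) * (a1 - sg * r * c1) + c1 * (b1 - sg * r * c2))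
        by ring.
      eapply Rle_trans. apply abs_lin_bound; eauto. rewrite Rabs_Ropp, Rplus_comm. fold L. nra. }
  destruct (Hend 1 (or_introl eq_refl) t0) as [P1 P2]; try ring.
  destruct (Hend (-1) (or_intror eq_refl) (t0 + PI)) as [M1 M2].
  { rewrite neg_cos; ring. } { rewrite neg_sin; ring. }
  assert (Hg1 : 0 < g t0).
  { unfold g. generalize (Rabs_maj2 (al t0 - 1 * r * N)); intro. generalize (Rabs_pos (be t0)); intros. nra. }
  assert (Hg2 : g (t0 + PI) < 0).
  { unfold g. generalize (Rle_abs (al (t0 + PI) - -1 * r * N)); intro. generalize (Rabs_pos (be (t0 + PI))); intros. nra. }
  destruct (IVT_gen g t0 (t0 + PI) 0 Hgc) as [t [_ Ht]].
  { rewrite Rmin_right, Rmax_left; lra. }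
  set (a1 := A (gx t, gy t)). set (b1 := B (gx t, gy t)).
  assert (Hnz : ~ (a1 = 0 /\ b1 = 0)).
  { apply Hiso. rewrite Hdist. lra. }
  assert (Hsm1 := Hds' (gx t, gy t) ltac:(rewrite Hdist; lra) Hnz). fold a1 b1 in Hsm1.
  assert (Hal : al t = k * Rabs (be t)) by (unfold g in Ht; lra).
  unfold al, be in Hal. fold a1 b1 in Hal.
  set (bt := - c2 * a1 + c1 * b1) in *.
  assert (Ea1 : N * a1 = c1 * (c1 * a1 + c2 * b1) - c2 * bt) by (unfold bt, N; ring).
  assert (Eb1 : N * b1 = c2 * (c1 * a1 + c2 * b1) + c1 * bt) by (unfold bt, N; ring).
  rewrite Hal in Ea1, Eb1.
  assert (Hbt : bt <> 0).
  { intros H0. rewrite H0, Rabs_R0 in Ea1, Eb1. apply Hnz. split.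
    - apply (Rmult_eq_reg_l N); lra.
    - apply (Rmult_eq_reg_l N); lra. }
  exists (if Rle_dec 0 bt then 1 else -1). split.
  { destruct (Rle_dec 0 bt); auto. }
  set (s := if Rle_dec 0 bt then 1 else -1).
  assert (Hs : bt = s * Rabs bt /\ s ^ 2 = 1).
  { unfold s. destruct (Rle_dec 0 bt).
    - rewrite Rabs_right by lra. split; ring.
    - rewrite Rabs_left by lra. split; ring. }
  destruct Hs as [Hs Hs2].
  set (lam := Rabs bt / N).
  assert (Hlam : 0 < lam) by (unfold lam; apply Rdiv_lt_0_compat; auto; apply Rabs_pos_lt; auto).
  assert (Ea : a1 = lam * (k * c1 - s * c2)).
  { apply (Rmult_eq_reg_l N); [|lra]. rewrite Ea1. unfold lam. rewrite Hs at 2. field. lra. }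
  assert (Eb : b1 = lam * (k * c2 + s * c1)).
  { apply (Rmult_eq_reg_l N); [|lra]. rewrite Eb1. unfold lam. rewrite Hs at 2. field. lra. }
  rewrite Ea, Eb in Hsm1.
  set (v1 := k * c1 - s * c2) in *. set (v2 := k * c2 + s * c1) in *.
  assert (Hv : v1 ^ 2 + v2 ^ 2 = (k ^ 2 + 1) * N).
  { unfold v1, v2, N. replace 1 with (s ^ 2) by auto. ring. }
  replace (Qf QY QS QX (lam * v1) (lam * v2)) with (lam ^ 2 * Qf QY QS QX v1 v2) in Hsm1
    by (unfold Qf; ring).
  replace ((lam * v1) ^ 2 + (lam * v2) ^ 2) with (lam ^ 2 * ((k ^ 2 + 1) * N)) in Hsm1
    by (rewrite <- Hv; ring).
  rewrite Rabs_mult, (Rabs_right (lam ^ 2)) in Hsm1 by (apply Rle_ge; apply pow2_ge_0).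
  unfold e' in Hsm1.
  replace (e / ((k ^ 2 + 1) * N) * (lam ^ 2 * ((k ^ 2 + 1) * N))) with (lam ^ 2 * e) in Hsm1
    by (field; split; nra).
  apply Rmult_le_reg_l in Hsm1; auto. apply pow_lt; auto.
Qed.


Lemma two_choice (F : R -> R) :
  (forall e, 0 < e -> exists s, (s = 1 \/ s = -1) /\ Rabs (F s) <= e) -> F 1 = 0 \/ F (-1) = 0.
Proof.
  intros H. destruct (Req_dec (F 1) 0) as [E|E]; auto. destruct (Req_dec (F (-1)) 0) as [E'|E']; auto.
  exfalso. assert (H1 := Rabs_pos_lt _ E). assert (H2 := Rabs_pos_lt _ E').
  destruct (H (Rmin (Rabs (F 1)) (Rabs (F (-1))) / 2)) as [s [[->| ->] Hs]].
  - generalize (Rmin_pos _ _ H1 H2); lra.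
  - generalize (Rmin_l (Rabs (F 1)) (Rabs (F (-1)))) (Rmin_pos _ _ H1 H2); lra.
  - generalize (Rmin_r (Rabs (F 1)) (Rabs (F (-1)))) (Rmin_pos _ _ H1 H2); lra.
Qed.

Lemma Q_zero QY QS QX c1 c2 : (c1 <> 0 \/ c2 <> 0) ->
  (forall k, k = 0 \/ k = 1 \/ k = 2 ->
    Qf QY QS QX (k * c1 - 1 * c2) (k * c2 + 1 * c1) = 0 \/
    Qf QY QS QX (k * c1 - -1 * c2) (k * c2 + -1 * c1) = 0) ->
  QY = 0 /\ QS = 0 /\ QX = 0.
Proof.
  intros Hc H.
  set (P := Qf QY QS QX c1 c2). set (Rr := Qf QY QS QX (- c2) c1).
  set (Bv := - QY * c1 * c2 - QS * (c1 ^ 2 - c2 ^ 2) / 2 + QX * c1 * c2).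
  assert (E : forall k s, s ^ 2 = 1 -> Qf QY QS QX (k * c1 - s * c2) (k * c2 + s * c1) = k ^ 2 * P + 2 * k * s * Bv + Rr).
  { intros k s Hs. unfold P, Rr, Bv, Qf.
    replace (k * c1 - s * c2) with (k * c1 - s * c2) by ring.
    transitivity (k ^ 2 * (QY * c1 ^ 2 - QS * c1 * c2 + QX * c2 ^ 2) +
      2 * k * s * (- QY * c1 * c2 - QS * (c1 ^ 2 - c2 ^ 2) / 2 + QX * c1 * c2) +
      s ^ 2 * (QY * (- c2) ^ 2 - QS * (- c2) * c1 + QX * c1 ^ 2)).
    - field.
    - rewrite Hs; ring. }
  assert (s1 : 1 ^ 2 = 1) by ring. assert (s2 : (-1) ^ 2 = 1) by ring.
  destruct (H 0 (or_introl eq_refl)) as [H0|H0]; rewrite E in H0 by auto;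
  destruct (H 1 (or_intror (or_introl eq_refl))) as [H1|H1]; rewrite E in H1 by auto;
  destruct (H 2 (or_intror (or_intror eq_refl))) as [H2|H2]; rewrite E in H2 by auto;
  assert (HP : P = 0 /\ Bv = 0 /\ Rr = 0) by (split; [|split]; nra); clear H0 H1 H2;
  destruct HP as [HP [HB HR]]; unfold P, Rr, Bv, Qf in *.
  all: assert (HN : 0 < c1 ^ 2 + c2 ^ 2) by (destruct Hc as [Hc|Hc]; [generalize (pow2_gt_0 c1 Hc) (pow2_ge_0 c2)| generalize (pow2_gt_0 c2 Hc) (pow2_ge_0 c1)]; intros; lra).
  all: assert (HX : QX = - QY) by (apply (Rmult_eq_reg_l (c1 ^ 2 + c2 ^ 2)); [nra| lra]).
  all: subst QX.
  all: set (d := c1 ^ 2 - c2 ^ 2) in *; set (f := 2 * c1 * c2) in *.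
  all: assert (Hdf : 0 < d ^ 2 + f ^ 2) by (unfold d, f; replace ((c1 ^ 2 - c2 ^ 2) ^ 2 + (2 * c1 * c2) ^ 2) with ((c1^2+c2^2)^2) by ring; nra).
  all: assert (Y1 : QY * d - QS * f / 2 = 0) by (unfold d, f; nra).
  all: assert (Y2 : QY * f + QS * d / 2 = 0) by (unfold d, f in *; nra).
  all: assert (QY * (d ^ 2 + f ^ 2) = 0) by (transitivity (d * (QY * d - QS * f / 2) + f * (QY * f + QS * d / 2)); [field| rewrite Y1, Y2; ring]).
  all: assert (QS / 2 * (d ^ 2 + f ^ 2) = 0) by (transitivity (- f * (QY * d - QS * f / 2) + d * (QY * f + QS * d / 2)); [field| rewrite Y1, Y2; ring]).
  all: assert (QY = 0) by (apply (Rmult_eq_reg_r (d ^ 2 + f ^ 2)); lra).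
  all: assert (QS = 0) by (assert (QS / 2 = 0) by (apply (Rmult_eq_reg_r (d ^ 2 + f ^ 2)); lra); lra).
  all: split; [|split]; lra.
Qed.


Lemma cont2_plus f g p : cont2_at f p -> cont2_at g p -> cont2_at (fun q => f q + g q) p.
Proof.
  intros Hf Hg e He. destruct (Hf (e/2) ltac:(lra)) as [d1 [Hd1 H1]].
  destruct (Hg (e/2) ltac:(lra)) as [d2 [Hd2 H2]].
  exists (Rmin d1 d2); split. apply Rmin_pos; auto.
  intros q Hq. specialize (H1 q (Rlt_le_trans _ _ _ Hq (Rmin_l _ _))).
  specialize (H2 q (Rlt_le_trans _ _ _ Hq (Rmin_r _ _))).
  replace (f q + g q - (f p + g p)) with ((f q - f p) + (g q - g p)) by ring.
  eapply Rle_lt_trans. apply Rabs_triang. lra.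
Qed.

Lemma cont2_opp f p : cont2_at f p -> cont2_at (fun q => - f q) p.
Proof.
  intros Hf e He. destruct (Hf e He) as [d [Hd H]]. exists d; split; auto.
  intros q Hq. replace (- f q - - f p) with (- (f q - f p)) by ring. rewrite Rabs_Ropp; auto.
Qed.

Lemma cont2_fst p : cont2_at fst p.
Proof. intros e He. exists e; split; auto. intros q Hq. eapply Rle_lt_trans. apply dist2_x. auto. Qed.
Lemma cont2_snd p : cont2_at snd p.
Proof. intros e He. exists e; split; auto. intros q Hq. eapply Rle_lt_trans. apply dist2_y. auto. Qed.

Lemma cont2_minus_const f c p : cont2_at f p -> cont2_at (fun q => f q - c) p.
Proof.
  intros H e He. destruct (H e He) as [d [Hd H']]. exists d; split; auto.
  intros q Hq. replace (f q - c - (f p - c)) with (f q - f p) by ring. auto.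
Qed.

Lemma Qf_diff Y S X Y' S' X' a b :
  Rabs (Qf Y S X a b - Qf Y' S' X' a b) <= (Rabs (Y - Y') + Rabs (S - S') + Rabs (X - X')) * (a ^ 2 + b ^ 2).
Proof.
  unfold Qf.
  replace (Y * a ^ 2 - S * a * b + X * b ^ 2 - (Y' * a ^ 2 - S' * a * b + X' * b ^ 2))
    with ((Y - Y') * a ^ 2 + (- (S - S')) * (a * b) + (X - X') * b ^ 2) by ring.
  eapply Rle_trans. apply Rabs_triang. eapply Rle_trans. apply Rplus_le_compat_r. apply Rabs_triang.
  rewrite !Rabs_mult, Rabs_Ropp.
  rewrite (Rabs_right (a ^ 2)) by (apply Rle_ge; apply pow2_ge_0).
  rewrite (Rabs_right (b ^ 2)) by (apply Rle_ge; apply pow2_ge_0).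
  assert (Rabs (a * b) <= a ^ 2 + b ^ 2).
  { rewrite Rabs_mult. rewrite <- (pow2_abs a), <- (pow2_abs b).
    generalize (Rabs_pos a) (Rabs_pos b); intros. nra. }
  generalize (Rabs_pos (Y - Y')) (Rabs_pos (S - S')) (Rabs_pos (X - X')) (pow2_ge_0 a) (pow2_ge_0 b); intros.
  rewrite Rabs_mult in H.
  nra.
Qed.

Lemma angle_rep (v1 v2 t : R) : 0 < cos t * v1 + sin t * v2 ->
  v1 = sqrt (v1 ^ 2 + v2 ^ 2) * cos (t + atan ((- sin t * v1 + cos t * v2) / (cos t * v1 + sin t * v2))) /\
  v2 = sqrt (v1 ^ 2 + v2 ^ 2) * sin (t + atan ((- sin t * v1 + cos t * v2) / (cos t * v1 + sin t * v2))).
Proof.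
  intros Hw.
  set (w1 := cos t * v1 + sin t * v2) in *. set (w2 := - sin t * v1 + cos t * v2).
  assert (Hcs := sin2_cos2 t). unfold Rsqr in Hcs.
  assert (Hw12 : w1 ^ 2 + w2 ^ 2 = v1 ^ 2 + v2 ^ 2).
  { unfold w1, w2. transitivity ((sin t * sin t + cos t * cos t) * (v1 ^ 2 + v2 ^ 2)); [ring| rewrite Hcs; ring]. }
  set (Nn := sqrt (v1 ^ 2 + v2 ^ 2)).
  assert (HN2 : Nn * Nn = v1 ^ 2 + v2 ^ 2) by (apply sqrt_sqrt; nra).
  assert (HN : 0 < Nn) by (apply sqrt_lt_R0; nra).
  assert (HS : sqrt (1 + (w2 / w1)²) = Nn / w1).
  { replace (1 + (w2 / w1)²) with ((Nn / w1)²).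
    apply sqrt_Rsqr. apply Rlt_le, Rdiv_lt_0_compat; auto.
    unfold Rsqr. replace (Nn / w1 * (Nn / w1)) with ((Nn * Nn) / (w1 * w1)) by (field; lra). rewrite HN2, <- Hw12. field. lra. }
  rewrite cos_plus, sin_plus, cos_atan, sin_atan, HS.
  split.
  - field_simplify; try lra. unfold w1, w2.
    transitivity (v1 * (sin t * sin t + cos t * cos t)); [rewrite Hcs; ring| ring].
  - field_simplify; try lra. unfold w1, w2.
    transitivity (v2 * (sin t * sin t + cos t * cos t)); [rewrite Hcs; ring| ring].
Qed.


Lemma cont2_to_2d f x0 y0 : cont2_at f (x0, y0) -> continuity_2d_pt (fun a b => f (a, b)) x0 y0.
Proof.
  intros H eps. destruct (H eps (cond_pos eps)) as [d [Hd H']].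
  assert (Hd2 : 0 < d / 2) by lra. exists (mkposreal _ Hd2). simpl. intros a b Ha Hb.
  apply H'. eapply Rle_lt_trans. apply dist2_le. simpl. lra.
Qed.

Lemma mul_bound c e M : Rabs c <= 1 -> Rabs e <= M -> - M <= c * e.
Proof.
  intros H1 H2. generalize (Rabs_maj2 (c * e)). rewrite Rabs_mult.
  generalize (Rabs_pos c) (Rabs_pos e); intros. nra.
Qed.

Theorem lemma3p8 (O : pt -> Prop) (u : pt -> R) (p0 : pt) :
  domain2 O ->
  C2_on O u ->
  isolated_sing O u p0 ->
  (forall e, 0 < e -> exists d, 0 < d /\
     forall p, O p -> ~ sing O u p -> 0 < dist2 p p0 < d ->
       Rabs (Hcurv u p) * dist2 p p0 <= e) ->
  differential_is_id (NperpD u) p0 /\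
  index_at (NperpD u) p0 1%Z /\
  dx (dx u) p0 = 0 /\ dy (dx u) p0 = 0 /\ dx (dy u) p0 = 0 /\ dy (dy u) p0 = 0.
Proof.
  intros [_ [Hopen _]] HC2 [[HO0 [Hs1 Hs2]] [di [Hdi Hiso]]] HH.
  destruct p0 as [x0 y0]. cbn [fst snd] in Hs1, Hs2.
  destruct (Hopen _ HO0) as [rho [Hrho HB]].
  assert (HCp : forall p, dist2 p (x0, y0) < rho -> O p /\
    ex_dx u p /\ ex_dy u p /\
    ex_dx (dx u) p /\ ex_dy (dx u) p /\ ex_dx (dy u) p /\ ex_dy (dy u) p /\
    cont2_at u p /\ cont2_at (dx u) p /\ cont2_at (dy u) p /\
    cont2_at (dx (dx u)) p /\ cont2_at (dy (dx u)) p /\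
    cont2_at (dx (dy u)) p /\ cont2_at (dy (dy u)) p).
  { intros p Hp. split. apply HB; auto. apply HC2. apply HB; auto. }
  assert (HC0 := HCp (x0, y0) ltac:(rewrite dist2_refl; lra)).
  destruct HC0 as (_ & _ & _ & _ & _ & _ & _ & _ & _ & _ & Cxx & Cyx & Cxy & Cyy).
  set (X0 := dx (dx u) (x0, y0)). set (Y0 := dy (dy u) (x0, y0)).
  set (m1 := dy (dx u) (x0, y0)). set (m2 := dx (dy u) (x0, y0)).
  assert (Hsch : m2 = m1).
  { unfold m1, m2.
    assert (Hloc : locally_2d (fun a b =>
          ex_derive (fun z : R => u (z, b)) a /\
          ex_derive (fun z : R => u (a, z)) b /\
          ex_derive (fun z : R => Derive (fun t : R => u (z, t)) b) a /\
          ex_derive (fun z : R => Derive (fun t : R => u (t, z)) a) b) x0 y0).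
    { assert (Hr2 : 0 < rho / 2) by lra. exists (mkposreal _ Hr2). intros a b Ha Hb. simpl in Ha, Hb.
      assert (Hd : dist2 (a, b) (x0, y0) < rho) by (eapply Rle_lt_trans; [apply dist2_le|simpl; lra]).
      destruct (HCp _ Hd) as (_ & E1 & E2 & E3 & E4 & E5 & E6 & _).
      split; [exact E1|split; [exact E2|split; [exact E5|exact E4]]]. }
    exact (Schwarz (fun a b => u (a, b)) x0 y0 Hloc (cont2_to_2d _ _ _ Cxy) (cont2_to_2d _ _ _ Cyx)). }
  assert (FA := frechet (aa u) (dx (dx u)) (fun p => dy (dx u) p - 1) (x0, y0) rho Hrho).
  assert (FB := frechet (bb u) (fun p => dx (dy u) p + 1) (dy (dy u)) (x0, y0) rho Hrho).
  specialize (FA ltac:(intros p Hp; destruct (HCp p Hp) as (_ & _ & _ & E3 & E4 & _);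
                      split; [apply aa_derx; auto| apply aa_dery; auto])
                 Cxx (cont2_minus_const _ _ _ Cyx)).
  specialize (FB ltac:(intros p Hp; destruct (HCp p Hp) as (_ & _ & _ & _ & _ & E5 & E6 & _);
                      split; [apply bb_derx; auto| apply bb_dery; auto])
                 (cont2_plus_const _ _ _ Cxy) Cyy).
  assert (Ha0 : aa u (x0, y0) = 0) by (unfold aa; simpl; lra).
  assert (Hb0 : bb u (x0, y0) = 0) by (unfold bb; simpl; lra).
  assert (FAB : forall e, 0 < e -> exists d, 0 < d /\ forall p, dist2 p (x0, y0) < d ->
     Rabs (aa u p - (X0 * (fst p - x0) + (m1 - 1) * (snd p - y0))) <= e * dist2 p (x0, y0) /\
     Rabs (bb u p - ((m2 + 1) * (fst p - x0) + Y0 * (snd p - y0))) <= e * dist2 p (x0, y0)).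
  { intros e He. destruct (FA e He) as [d1 [Hd1 H1]]. destruct (FB e He) as [d2 [Hd2 H2]].
    exists (Rmin d1 d2). split. apply Rmin_pos; auto.
    intros p Hp. specialize (H1 p (Rlt_le_trans _ _ _ Hp (Rmin_l _ _))).
    specialize (H2 p (Rlt_le_trans _ _ _ Hp (Rmin_r _ _))).
    rewrite Ha0 in H1. rewrite Hb0 in H2. cbn [fst snd] in H1, H2.
    split.
    - replace (aa u p - (X0 * (fst p - x0) + (m1 - 1) * (snd p - y0))) with
        (aa u p - 0 - dx (dx u) (x0, y0) * (fst p - x0) - (dy (dx u) (x0, y0) - 1) * (snd p - y0))
        by (unfold X0, m1; ring). auto.
    - replace (bb u p - ((m2 + 1) * (fst p - x0) + Y0 * (snd p - y0))) with
        (bb u p - 0 - (dx (dy u) (x0, y0) + 1) * (fst p - x0) - dy (dy u) (x0, y0) * (snd p - y0))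
        by (unfold Y0, m2; ring). auto. }
  clear FA FB.
  set (C := Rabs X0 + Rabs (m1 - 1) + Rabs (m2 + 1) + Rabs Y0 + 2).
  assert (HC : 0 < C) by (unfold C; generalize (Rabs_pos X0) (Rabs_pos (m1 - 1)) (Rabs_pos (m2 + 1)) (Rabs_pos Y0); lra).
  assert (Hlin : exists d, 0 < d /\ forall p, dist2 p (x0, y0) < d ->
     Rabs (aa u p) + Rabs (bb u p) <= C * dist2 p (x0, y0)).
  { destruct (FAB 1 Rlt_0_1) as [d [Hd H]]. exists d; split; auto. intros p Hp.
    destruct (H p Hp) as [H1 H2].
    set (r := dist2 p (x0, y0)) in *.
    assert (Hx : Rabs (fst p - x0) <= r) by apply (dist2_x p (x0, y0)).
    assert (Hy : Rabs (snd p - y0) <= r) by apply (dist2_y p (x0, y0)).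
    assert (L1 : Rabs (X0 * (fst p - x0) + (m1 - 1) * (snd p - y0)) <= (Rabs X0 + Rabs (m1 - 1)) * r).
    { eapply Rle_trans. apply Rabs_triang. rewrite !Rabs_mult.
      generalize (Rabs_pos X0) (Rabs_pos (m1 - 1)); intros. nra. }
    assert (L2 : Rabs ((m2 + 1) * (fst p - x0) + Y0 * (snd p - y0)) <= (Rabs (m2 + 1) + Rabs Y0) * r).
    { eapply Rle_trans. apply Rabs_triang. rewrite !Rabs_mult.
      generalize (Rabs_pos Y0) (Rabs_pos (m2 + 1)); intros. nra. }
    assert (T1 := Rabs_triang_inv (aa u p) (X0 * (fst p - x0) + (m1 - 1) * (snd p - y0))).
    assert (T2 := Rabs_triang_inv (bb u p) ((m2 + 1) * (fst p - x0) + Y0 * (snd p - y0))).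
    unfold C. lra. }
  assert (Hsm : forall e, 0 < e -> exists d, 0 < d /\ forall p, 0 < dist2 p (x0, y0) < d ->
     ~ (aa u p = 0 /\ bb u p = 0) ->
     Rabs (Qf Y0 (m1 + m2) X0 (aa u p) (bb u p)) <= e * (aa u p ^ 2 + bb u p ^ 2)).
  { intros e He.
    set (e1 := e / (2 * C)).
    assert (He1 : 0 < e1) by (unfold e1; apply Rdiv_lt_0_compat; lra).
    destruct (HH e1 He1) as [d1 [Hd1 H1]].
    destruct (Cxx (e/8) ltac:(lra)) as [d2 [Hd2 H2]].
    destruct (Cyx (e/8) ltac:(lra)) as [d3 [Hd3 H3]].
    destruct (Cxy (e/8) ltac:(lra)) as [d4 [Hd4 H4]].
    destruct (Cyy (e/8) ltac:(lra)) as [d5 [Hd5 H5]].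
    destruct Hlin as [d6 [Hd6 H6]].
    set (d := Rmin (Rmin (Rmin rho d1) (Rmin d2 d3)) (Rmin (Rmin d4 d5) d6)).
    assert (Hd : 0 < d) by (unfold d; repeat apply Rmin_pos; auto).
    exists d. split; auto.
    intros p [Hp0 Hpd] Hnz.
    set (r := dist2 p (x0, y0)) in *.
    assert (Hds : r < rho /\ r < d1 /\ r < d2 /\ r < d3 /\ r < d4 /\ r < d5 /\ r < d6).
    { unfold d in Hpd.
      generalize (Rmin_l (Rmin (Rmin rho d1) (Rmin d2 d3)) (Rmin (Rmin d4 d5) d6))
        (Rmin_r (Rmin (Rmin rho d1) (Rmin d2 d3)) (Rmin (Rmin d4 d5) d6))
        (Rmin_l (Rmin rho d1) (Rmin d2 d3)) (Rmin_r (Rmin rho d1) (Rmin d2 d3))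
        (Rmin_l rho d1) (Rmin_r rho d1) (Rmin_l d2 d3) (Rmin_r d2 d3)
        (Rmin_l (Rmin d4 d5) d6) (Rmin_r (Rmin d4 d5) d6) (Rmin_l d4 d5) (Rmin_r d4 d5).
      intros. repeat split; lra. }
    destruct Hds as (R1 & R2 & R3 & R4 & R5 & R6 & R7).
    destruct (HCp p R1) as (HOp & _ & _ & E3 & E4 & E5 & E6 & _).
    assert (Hnsing : ~ sing O u p).
    { intros [_ [S1 S2]]. apply Hnz. unfold aa, bb. split; lra. }
    specialize (H1 p HOp Hnsing (conj Hp0 R2)). fold r in H1.
    assert (Hpos : 0 < aa u p ^ 2 + bb u p ^ 2).
    { destruct (Req_dec (aa u p) 0) as [Ea|Ea].
      - assert (bb u p <> 0) by tauto. generalize (pow2_gt_0 _ H) (pow2_ge_0 (aa u p)); lra.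
      - generalize (pow2_gt_0 _ Ea) (pow2_ge_0 (bb u p)); lra. }
    assert (HF := Hcurv_formula u p E3 E4 E5 E6 Hpos).
    change (Dlen u p) with (sqrt (aa u p ^ 2 + bb u p ^ 2)) in HF.
    specialize (H6 p R7). fold r in H6.
    specialize (H2 p R3). specialize (H3 p R4). specialize (H4 p R5). specialize (H5 p R6).
    set (A := aa u p) in *. set (B := bb u p) in *.
    set (Qp := Qf (dy (dy u) p) (dy (dx u) p + dx (dy u) p) (dx (dx u) p) A B).
    assert (HQp : Qp = Hcurv u p * sqrt (A ^ 2 + B ^ 2) * (A ^ 2 + B ^ 2)).
    { rewrite HF. unfold Qp, Qf. field. lra. }
    assert (HD : sqrt (A ^ 2 + B ^ 2) <= C * r) by (eapply Rle_trans; [apply sqrt_sum_le| lra]).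
    assert (HQp2 : Rabs Qp <= e / 2 * (A ^ 2 + B ^ 2)).
    { rewrite HQp, !Rabs_mult. rewrite (Rabs_right (A ^ 2 + B ^ 2)) by lra.
      rewrite (Rabs_right (sqrt _)) by (apply Rle_ge, sqrt_pos).
      apply Rmult_le_compat_r; [lra|].
      apply Rle_trans with (Rabs (Hcurv u p) * (C * r)).
      apply Rmult_le_compat_l; auto using Rabs_pos.
      replace (Rabs (Hcurv u p) * (C * r)) with (C * (Rabs (Hcurv u p) * r)) by ring.
      apply Rle_trans with (C * e1). apply Rmult_le_compat_l; lra.
      unfold e1. right. field. lra. }
    assert (Hdiff := Qf_diff Y0 (m1 + m2) X0 (dy (dy u) p) (dy (dx u) p + dx (dy u) p) (dx (dx u) p) A B).
    fold Qp in Hdiff.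
    assert (Hsum : Rabs (Y0 - dy (dy u) p) + Rabs (m1 + m2 - (dy (dx u) p + dx (dy u) p)) +
                   Rabs (X0 - dx (dx u) p) <= e / 2).
    { rewrite Rabs_minus_sym in H2, H3, H4, H5. fold X0 Y0 m1 m2 in H2, H3, H4, H5.
      assert (Rabs (m1 + m2 - (dy (dx u) p + dx (dy u) p)) <= Rabs (m1 - dy (dx u) p) + Rabs (m2 - dx (dy u) p)).
      { replace (m1 + m2 - (dy (dx u) p + dx (dy u) p)) with ((m1 - dy (dx u) p) + (m2 - dx (dy u) p)) by ring.
        apply Rabs_triang. }
      lra. }
    assert (T := Rabs_triang (Qf Y0 (m1 + m2) X0 A B - Qp) Qp).
    replace (Qf Y0 (m1 + m2) X0 A B - Qp + Qp) with (Qf Y0 (m1 + m2) X0 A B) in T by ring.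
    assert (Rabs (Qf Y0 (m1 + m2) X0 A B - Qp) <= e / 2 * (A ^ 2 + B ^ 2)).
    { eapply Rle_trans. exact Hdiff. apply Rmult_le_compat_r; lra. }
    lra. }
  assert (Hisol : exists d, 0 < d /\ forall p, 0 < dist2 p (x0, y0) < d -> ~ (aa u p = 0 /\ bb u p = 0)).
  { exists (Rmin rho di). split. apply Rmin_pos; auto.
    intros p [Hp1 Hp2] [Ea Eb].
    assert (Hr : dist2 p (x0, y0) < rho) by (eapply Rlt_le_trans; [exact Hp2| apply Rmin_l]).
    apply (Hiso p (HB p Hr)). split; auto. eapply Rlt_le_trans; [exact Hp2| apply Rmin_r].
    split; [apply HB; auto|]. unfold aa, bb in Ea, Eb. split; lra. }
  assert (Hcont : forall p, dist2 p (x0, y0) < rho -> cont2_at (aa u) p /\ cont2_at (bb u) p).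
  { intros p Hp. destruct (HCp p Hp) as (_ & _ & _ & _ & _ & _ & _ & _ & Cx & Cy & _).
    split.
    - exact (cont2_plus _ _ _ Cx (cont2_opp _ _ (cont2_snd p))).
    - exact (cont2_plus _ _ _ Cy (cont2_fst p)). }
  assert (Hc : exists t0 c1 c2, c1 = X0 * cos t0 + (m1 - 1) * sin t0 /\
              c2 = (m2 + 1) * cos t0 + Y0 * sin t0 /\ (c1 <> 0 \/ c2 <> 0)).
  { destruct (Req_dec X0 0) as [E1|E1]; [destruct (Req_dec (m2 + 1) 0) as [E2|E2]|].
    - exists (PI / 2), (m1 - 1), Y0. rewrite cos_PI2, sin_PI2.
      split; [ring|split; [ring|]]. left. rewrite Hsch in E2. lra.
    - exists 0, X0, (m2 + 1). rewrite cos_0, sin_0. split; [ring| split; [ring| right; auto]].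
    - exists 0, X0, (m2 + 1). rewrite cos_0, sin_0. split; [ring| split; [ring| left; auto]]. }
  destruct Hc as [t0 [c1 [c2 [Ec1 [Ec2 Hcn]]]]].
  assert (HQ : Y0 = 0 /\ m1 + m2 = 0 /\ X0 = 0).
  { apply (Q_zero Y0 (m1 + m2) X0 c1 c2 Hcn).
    intros k Hk.
    apply (two_choice (fun s => Qf Y0 (m1 + m2) X0 (k * c1 - s * c2) (k * c2 + s * c1))).
    apply (key_abstract (aa u) (bb u) x0 y0 X0 (m1 - 1) (m2 + 1) Y0 Y0 (m1 + m2) X0 rho t0
             Hrho Hcont FAB Hisol Hsm c1 c2 Ec1 Ec2 Hcn k).
    destruct Hk as [->|[->| ->]]; lra. }
  destruct HQ as [HY [Hm HX]].
  assert (Hm1 : m1 = 0) by lra. assert (Hm2 : m2 = 0) by lra.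
  assert (FV : forall e, 0 < e -> exists d, 0 < d /\ forall p, dist2 p (x0, y0) < d ->
     Rabs (bb u p - (fst p - x0)) <= e * dist2 p (x0, y0) /\
     Rabs (- aa u p - (snd p - y0)) <= e * dist2 p (x0, y0)).
  { intros e He. destruct (FAB e He) as [d [Hd H]]. exists d; split; auto.
    intros p Hp. destruct (H p Hp) as [H1 H2]. rewrite HX, Hm1 in H1. rewrite Hm2, HY in H2.
    split.
    - replace (bb u p - (fst p - x0)) with (bb u p - ((0 + 1) * (fst p - x0) + 0 * (snd p - y0))) by ring. auto.
    - replace (- aa u p - (snd p - y0)) with (- (aa u p - (0 * (fst p - x0) + (0 - 1) * (snd p - y0)))) by ring.
      rewrite Rabs_Ropp. auto. }
  cbn [fst snd].
  split; [|split; [|repeat split; auto]].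
  -
    intros e He. destruct (FV (e / 2) ltac:(lra)) as [d [Hd H]]. exists d; split; auto.
    intros p Hp. destruct (H p Hp) as [H1 H2].
    unfold NperpD, norm2. cbn [fst snd].
    eapply Rle_trans; [apply sqrt_sum_le|].
    replace (dy u p + fst p - (dy u (x0, y0) + x0) - (fst p - x0)) with (bb u p - (fst p - x0))
      by (unfold bb; lra).
    replace (- dx u p + snd p - (- dx u (x0, y0) + y0) - (snd p - y0)) with (- aa u p - (snd p - y0))
      by (unfold aa; lra).
    lra.
  -
    split.
    { unfold NperpD. cbn [fst snd]. f_equal; lra. }
    destruct (FV (1 / 4) ltac:(lra)) as [d [Hd HV]].
    exists (Rmin rho d). split. apply Rmin_pos; auto.
    split.
    { intros p [Hp1 Hp2] HVp. unfold NperpD in HVp. injection HVp as E1 E2.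
      destruct (HV p (Rlt_le_trans _ _ _ Hp2 (Rmin_r _ _))) as [H1 H2].
      change (bb u p) with (dy u p + fst p) in H1. rewrite E1 in H1.
      replace (- aa u p) with (- dx u p + snd p) in H2 by (unfold aa; ring). rewrite E2 in H2.
      rewrite Rminus_0_l, Rabs_Ropp in H1, H2.
      generalize (dist2_le p (x0, y0)). cbn [fst snd]. lra. }
    intros r [Hr1 Hr2].
    set (V1 := fun t => fst (NperpD u (x0 + r * cos t, y0 + r * sin t))).
    set (V2 := fun t => snd (NperpD u (x0 + r * cos t, y0 + r * sin t))).
    set (W1 := fun t => cos t * V1 t + sin t * V2 t).
    set (W2 := fun t => - sin t * V1 t + cos t * V2 t).
    assert (Hdc : forall t, dist2 (x0 + r * cos t, y0 + r * sin t) (x0, y0) = r)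
      by (intros; apply dist2_circle; lra).
    assert (HW1 : forall t, 0 < W1 t).
    { intros t. destruct (HV (x0 + r * cos t, y0 + r * sin t)) as [H1 H2].
      rewrite Hdc. eapply Rlt_le_trans; [exact Hr2| apply Rmin_r].
      rewrite Hdc in H1, H2. cbn [fst snd] in H1, H2.
      unfold W1, V1, V2, NperpD. cbn [fst snd].
      change (dy u (x0 + r * cos t, y0 + r * sin t) + (x0 + r * cos t))
        with (bb u (x0 + r * cos t, y0 + r * sin t)).
      replace (- dx u (x0 + r * cos t, y0 + r * sin t) + (y0 + r * sin t))
        with (- aa u (x0 + r * cos t, y0 + r * sin t)) by (unfold aa; simpl; ring).
      set (b1 := bb u (x0 + r * cos t, y0 + r * sin t)) in *.
      set (a1 := - aa u (x0 + r * cos t, y0 + r * sin t)) in *.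
      replace (x0 + r * cos t - x0) with (r * cos t) in H1 by ring.
      replace (y0 + r * sin t - y0) with (r * sin t) in H2 by ring.
      assert (Hc1 : Rabs (cos t) <= 1) by (apply Rabs_le; apply COS_bound).
      assert (Hs1' : Rabs (sin t) <= 1) by (apply Rabs_le; apply SIN_bound).
      assert (M1 := mul_bound _ _ _ Hc1 H1). assert (M2 := mul_bound _ _ _ Hs1' H2).
      assert (Hcs := sin2_cos2 t). unfold Rsqr in Hcs.
      replace (cos t * b1 + sin t * a1) with
        (r * (sin t * sin t + cos t * cos t) + cos t * (b1 - r * cos t) + sin t * (a1 - r * sin t)) by ring.
      rewrite Hcs. lra. }
    assert (HVc : forall t, continuity_pt V1 t /\ continuity_pt V2 t).
    { intros t.
      assert (Hp : dist2 (x0 + r * cos t, y0 + r * sin t) (x0, y0) < rho)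
        by (rewrite Hdc; eapply Rlt_le_trans; [exact Hr2| apply Rmin_l]).
      destruct (HCp _ Hp) as (_ & _ & _ & _ & _ & _ & _ & _ & Cx & Cy & _).
      split.
      - apply (cont2_comp (fun q => fst (NperpD u q))). apply circ_x_cont. apply circ_y_cont.
        exact (cont2_plus _ _ _ Cy (cont2_fst _)).
      - apply (cont2_comp (fun q => snd (NperpD u q))). apply circ_x_cont. apply circ_y_cont.
        exact (cont2_plus _ _ _ (cont2_opp _ _ Cx) (cont2_snd _)). }
    exists (fun t => t + atan (W2 t / W1 t)).
    split; [|split].
    + intros t. destruct (HVc t) as [C1 C2].
      assert (HW1c : continuity_pt W1 t).
      { unfold W1. apply cpt_plus; apply cpt_mult; auto using cpt_cos, cpt_sin. }
      assert (HW2c : continuity_pt W2 t).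
      { unfold W2. apply cpt_plus; apply cpt_mult; auto using cpt_cos.
        exact (continuity_pt_opp _ _ (cpt_sin t)). }
      apply cpt_plus. apply cpt_id.
      apply (continuity_pt_comp (fun s => W2 s / W1 s) atan).
      exact (continuity_pt_div _ _ _ HW2c HW1c (Rgt_not_eq _ _ (HW1 t))).
      apply derivable_continuous_pt, derivable_pt_atan.
    + intros t Ht. cbv zeta. exact (angle_rep _ _ _ (HW1 t)).
    + cbv beta. unfold W1, W2, V1, V2. rewrite cos_2PI, sin_2PI, cos_0, sin_0. simpl IZR. ring.
Qed.
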